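(* Suppose Assumptions 1–3 below hold. Let $x,x'\in\mathrm{Supp}(X_T)$. (a) If $x<x'$ and $U_T$ is locally concave or convex on $[\min(x,\underline x_T(x')),\overline x_T(x')]$, then $$(x'-x)\min\Big\{\tfrac{\Delta^{ATT}(x,\underline x_T(x'))}{\underline x_T(x')-x},\tfrac{\Delta^{ATT}(x,\overline x_T(x'))}{\overline x_T(x')-x}\Big\}\le\Delta^{ATT}(x,x')\le(x'-x)\max\Big\{\tfrac{\Delta^{ATT}(x,\underline x_T(x'))}{\underline x_T(x')-x},\tfrac{\Delta^{ATT}(x,\overline x_T(x'))}{\overline x_T(x')-x}\Big\}.$$ (b) If $U_T$ is locally concave or convex on $[\underline x_T(x),\overline x_T(x)]$, then $$\min\Big\{\tfrac{\Delta^{ATT}(x,\underline x_T(x))}{\underline x_T(x)-x},\tfrac{\Delta^{ATT}(x,\overline x_T(x))}{\overline x_T(x)-x}\Big\}\le\Delta^{AME}(x)\le\max\Big\{\tfrac{\Delta^{ATT}(x,\underline x_T(x))}{\underline x_T(x)-x},\tfrac{\Delta^{ATT}(x,\overline x_T(x))}{\overline x_T(x)-x}\Big\}.$$ The bounds are understood to be infinite when $\underline x_T(x')=-\infty$ or $\overline x_T(x')=+\infty$ (in both cases $x'>x$ and $x'=x$). Assumption 1: for all $t$, $Y_t(x)=g_t(U_t(x))$, where for all $(x,v)\in\mathcal X\times[0,1]$ the conditional distribution of $U_t(x)$ given $V_t=v$ does not depend on $t$. Assumption 2: for all $(x,t)$, $U_t(x)\in\mathbb R$ and $g_t$ is strictly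 increasing; $g_T(y)=y$ for all $y\in\mathrm{Supp}(Y_T)$. Assumption 3: for all $t\in\{1,\dots,T-1\}$ there exists $x_t^*$ with $F_{X_t}(x_t^* )=F_{X_T}(x_t^* )\in(0,1)$.
   Context: Periods $t\in\{1,\dots,T\}$; for each $t$ and $x\in\mathcal X\subset\mathbb R$ a real potential outcome $Y_t(x)$; observed treatment $X_t\in\mathbb R$ and outcome $Y_t=Y_t(X_t)$ (repeated cross-sections). $F_A$ is a cdf, $F_A^{-1}$ the quantile function, $V_t=F_{X_t}(X_t)$, $q_t=F^{-1}_{X_t}\circ F_{X_T}$. $\Delta^{ATT}(x,x')=E[Y_T(x')-Y_T(x)\mid X_T=x]$ and $\Delta^{AME}(x)=E[\frac{dY_T}{dx}(x)\mid X_T=x]$. The map $x\mapsto U_T(x)$ is locally concave or convex on $[a,b]$ if almost surely it is twice differentiable and either $\partial^2U_T/\partial x^2(u)\le0$ for all $u\in[a,b]$ a.s., or $\partial^2U_T/\partial x^2(u)\ge0$ for all $u\in[a,b]$ a.s. For fixed $x$ and for $x'\in\mathrm{Supp}(X_T)$ define $\underline x_T(x')=\max\{q_t(x):t\in\{1,\dots,T-1\},\ q_t(x)\ne x,\ q_t(x)<x'\}$ and $\overline x_T(x')=\min\{q_t(x):t\in\{1,\dots,T-1\},\ q_t(x)\ne x,\ q_t(x)>x'\}$, with $\underline x_T(x')=-\infty$, resp. $\overline x_T(x')=+\infty$, if the set is empty (these depend on $x$ as well). *)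

(* Defs.v *)
From HB Require Import structures.
From mathcomp Require Import all_boot all_order all_algebra.
From mathcomp Require Import all_classical all_reals all_analysis.
Set Implicit Arguments. Unset Strict Implicit. Unset Printing Implicit Defensive.
Import Order.TTheory GRing.Theory Num.Theory.
Import numFieldNormedType.Exports.
Local Open Scope classical_set_scope.
Local Open Scope ring_scope.

Section Defs.
Context (R : realType) (d : measure_display) (Omega : measurableType d)
        (P : probability Omega R).

Definition cdf (A : Omega -> R) (y : R) : R := fine (P [set w | A w <= y]).

(* quantile function F_A^{-1}(p) = inf {y | F_A(y) >= p}, in the extended reals
   (= -oo for p = 0, +oo if the set is empty) *)
Definition quantile (A : Omega -> R) (p : R) : \bar R :=
  ereal_inf (EFin @` [set y | p <= cdf A y]).

Definition supp (A : Omega -> R) : set R :=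
  [set x | forall e : R, 0 < e -> (0 < P [set w | (`|A w - x| < e)%R])%E].

Definition Vt (A : Omega -> R) : Omega -> R := fun w => cdf A (A w).

Definition qt (Xt XT : Omega -> R) (x : R) : \bar R := quantile Xt (cdf XT x).

(* underline x_T(x') and overline x_T(x') (depending on x), periods t = 1..T-1;
   max of the empty set is -oo, min of the empty set is +oo *)
Definition x_low (X : nat -> Omega -> R) (T : nat) (x x' : R) : \bar R :=
  \big[maxe/-oo%E]_(1 <= t < T | (qt (X t) (X T) x != x%:E)
                               && (qt (X t) (X T) x < x'%:E)%O) qt (X t) (X T) x.
Definition x_up (X : nat -> Omega -> R) (T : nat) (x x' : R) : \bar R :=
  \big[mine/+oo%E]_(1 <= t < T | (qt (X t) (X T) x != x%:E)
                               && (x'%:E < qt (X t) (X T) x)%O) qt (X t) (X T) x.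

(* Pointwise conditional expectation E[Z | A = x], defined canonically as the
   limit, as h -> 0+, of E[Z 1{|A - x| < h}] / P(|A - x| < h). *)
Definition local_avg (A Z : Omega -> R) (x h : R) : R :=
  Rintegral P [set w | `|A w - x| < h] Z / fine (P [set w | `|A w - x| < h]).
Definition cond_exp (A Z : Omega -> R) (x : R) : R :=
  lim (local_avg A Z x h @[h --> 0^'+]).
Definition cond_exp_defined (A Z : Omega -> R) (x : R) : Prop :=
  P.-integrable setT (EFin \o Z) /\ cvg (local_avg A Z x h @[h --> 0^'+]).

Definition ATT (XT : Omega -> R) (YT : R -> Omega -> R) (x x' : R) : R :=
  cond_exp XT (fun w => YT x' w - YT x w) x.
Definition ATT_defined (XT : Omega -> R) (YT : R -> Omega -> R) (x x' : R) :=
  cond_exp_defined XT (fun w => YT x' w - YT x w) x.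

Definition AME (XT : Omega -> R) (YT : R -> Omega -> R) (x : R) : R :=
  cond_exp XT (fun w => derive1 (fun y => YT y w) x) x.
Definition AME_defined (XT : Omega -> R) (YT : R -> Omega -> R) (x : R) :=
  {ae P, forall w, derivable (fun y => YT y w) x 1}
  /\ cond_exp_defined XT (fun w => derive1 (fun y => YT y w) x) x.

(* x |-> U_T(x) locally concave or convex on [a,b]; U_T is defined on the
   treatment space Xs, so [a,b] must lie in Xs. *)
Definition twice_diff_on (f : R -> R) (a b : R) : Prop :=
  forall u, a <= u <= b -> derivable f u 1 /\ derivable (derive1 f) u 1.
Definition loc_concave_or_convex (Xs : set R) (UT : R -> Omega -> R) (a b : R) :=
  `[a, b] `<=` Xs
  /\ {ae P, forall w, twice_diff_on (fun y => UT y w) a b}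
  /\ ({ae P, forall w, forall u, a <= u <= b -> derive1 (derive1 (fun y => UT y w)) u <= 0}
      \/ {ae P, forall w, forall u, a <= u <= b -> 0 <= derive1 (derive1 (fun y => UT y w)) u}).

(* Assumption 1: Y_t(x) = g_t(U_t(x)) and, for x in Xs, the conditional
   distribution of U_t(x) given V_t = v does not depend on t: a single
   probability kernel kappa is a version of it for every period t. *)
Definition assumption1 (T : nat) (Xs : set R) (X : nat -> Omega -> R)
    (U Y : nat -> R -> Omega -> R) (g : nat -> R -> R) : Prop :=
  (forall t x w, (1 <= t <= T)%N -> Xs x -> Y t x w = g t (U t x w))
  /\ forall x, Xs x -> exists kappa : R.-pker R ~> R,
       forall t, (1 <= t <= T)%N -> forall A B : set R, measurable A -> measurable B ->
         P (U t x @^-1` A `&` Vt (X t) @^-1` B)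
         = (\int[P]_(w in Vt (X t) @^-1` B) kappa (Vt (X t) w) A)%E.

Definition suppYT (T : nat) (Xs : set R) (Y : nat -> R -> Omega -> R) : set R :=
  [set y | exists2 x, Xs x & supp (Y T x) y].

Definition assumption2 (T : nat) (Xs : set R) (Y : nat -> R -> Omega -> R)
    (g : nat -> R -> R) : Prop :=
  (forall t, (1 <= t <= T)%N -> {homo g t : a b / a < b})
  /\ (forall y, suppYT T Xs Y y -> g T y = y).

Definition assumption3 (T : nat) (X : nat -> Omega -> R) : Prop :=
  forall t, (1 <= t < T)%N -> exists xs : R,
    cdf (X t) xs = cdf (X T) xs /\ 0 < cdf (X T) xs < 1.

End Defs.

(* Main.v *)
Require Import Defs.
From HB Require Import structures.
From mathcomp Require Import all_boot all_order all_algebra.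
From mathcomp Require Import all_classical all_reals all_analysis.
From mathcomp Require Import measurable_realfun ring lra.
Import Order.TTheory GRing.Theory Num.Theory.
Import numFieldNormedType.Exports.
Local Open Scope classical_set_scope.
Local Open Scope ring_scope.

Module Helpers.
Set Implicit Arguments. Unset Strict Implicit. Unset Printing Implicit Defensive.

Section Real.
Context (R : realType).
Implicit Types (f : R -> R).

Lemma chord f a b p q r :
  (forall u, a <= u <= b -> derivable f u 1) ->
  (forall u v, a <= u -> u <= v -> v <= b -> derive1 f v <= derive1 f u) ->
  a <= p -> p < q -> q < r -> r <= b ->
  (f r - f q) * (q - p) <= (f q - f p) * (r - q).
Proof.
move=> fd fm ap pq qr rb.
have cont : forall s t, a <= s -> t <= b -> {within `[s, t], continuous f}.
  move=> s t sa tb; apply: derivable_within_continuous => u.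
  rewrite in_itv /= => /andP[su ut]; apply: fd.
  by rewrite (le_trans sa su) (le_trans ut tb).
have der : forall s t, a <= s -> t <= b -> forall u, u \in `]s, t[ -> is_derive u 1 f (derive1 f u).
  move=> s t sa tb u; rewrite in_itv /= => /andP[su ut].
  rewrite derive1E; apply: derivableP; apply: fd.
  by rewrite (le_trans sa (ltW su)) (le_trans (ltW ut) tb).
have [c1 c1i e1] := MVT pq (der p q ap (ltW (lt_le_trans qr rb))) (cont p q ap (ltW (lt_le_trans qr rb))).
have [c2 c2i e2] := MVT qr (der q r (ltW (le_lt_trans ap pq)) rb) (cont q r (ltW (le_lt_trans ap pq)) rb).
move: c1i c2i; rewrite !in_itv /= => /andP[pc1 c1q] /andP[qc2 c2r].
rewrite e1 e2.
have h : derive1 f c2 <= derive1 f c1.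
  apply: fm; first exact: (le_trans ap (ltW pc1)).
    exact: ltW (lt_trans c1q qc2).
  exact: (le_trans (ltW c2r) rb).
have hp : 0 < (r - q) * (q - p) by apply: mulr_gt0; rewrite subr_gt0.
rewrite -mulrA [X in _ <= X]mulrAC -mulrA.
by rewrite ler_wpM2r // ltW.
Qed.


Lemma slope_mono f a b x z1 z2 :
  (forall u, a <= u <= b -> derivable f u 1) ->
  (forall u v, a <= u -> u <= v -> v <= b -> derive1 f v <= derive1 f u) ->
  a <= x -> x <= b -> a <= z1 -> z1 < z2 -> z2 <= b -> z1 != x -> z2 != x ->
  (f z2 - f x) / (z2 - x) <= (f z1 - f x) / (z1 - x).
Proof.
move=> fd fm ax xb az1 z12 z2b n1 n2.
set s1 := (f z1 - f x) / (z1 - x); set s2 := (f z2 - f x) / (z2 - x).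
have e1 : f z1 = f x + s1 * (z1 - x) by rewrite /s1 divfK ?subr_eq0 //; ring.
have e2 : f z2 = f x + s2 * (z2 - x) by rewrite /s2 divfK ?subr_eq0 //; ring.
rewrite -/s1 -/s2.
case: (ltgtP x z1) => [xz1|z1x|]; last by move=> ex; rewrite ex eqxx in n1.
- have := chord fd fm ax xz1 z12 z2b; rewrite e1 e2 => h.
  have p1 : 0 < z1 - x by rewrite subr_gt0.
  have p2 : 0 < z2 - x by rewrite subr_gt0 (lt_trans xz1).
  rewrite leNgt; apply/negP => hs.
  have : 0 < (s2 - s1) * ((z1 - x) * (z2 - x)) by rewrite mulr_gt0 ?subr_gt0 // mulr_gt0.
  nra.
- case: (ltgtP x z2) => [xz2|z2x|]; last by move=> ex; rewrite ex eqxx in n2.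
  + have := chord fd fm az1 z1x xz2 z2b; rewrite e1 e2 => h.
    have p1 : 0 < x - z1 by rewrite subr_gt0.
    have p2 : 0 < z2 - x by rewrite subr_gt0.
    rewrite leNgt; apply/negP => hs.
    have : 0 < (s2 - s1) * ((x - z1) * (z2 - x)) by rewrite mulr_gt0 ?subr_gt0 // mulr_gt0.
    nra.
  + have := chord fd fm az1 z12 z2x xb; rewrite e1 e2 => h.
    have p1 : 0 < x - z1 by rewrite subr_gt0.
    have p2 : 0 < x - z2 by rewrite subr_gt0.
    rewrite leNgt; apply/negP => hs.
    have : 0 < (s2 - s1) * ((x - z1) * (x - z2)) by rewrite mulr_gt0 ?subr_gt0 // mulr_gt0.
    nra.
Qed.


Lemma d1_nincr f a b :
  (forall u, a <= u <= b -> derivable f u 1 /\ derivable (derive1 f) u 1) ->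
  (forall u, a <= u <= b -> derive1 (derive1 f) u <= 0) ->
  forall u v, a <= u -> u <= v -> v <= b -> derive1 f v <= derive1 f u.
Proof.
move=> fd fdd u v au uv vb.
apply: (@ler0_derive1_le_cc _ (derive1 f) a b).
- by move=> y; rewrite in_itv /= => /andP[h1 h2]; apply: (fd y _).2; rewrite (ltW h1) (ltW h2).
- by move=> y; rewrite in_itv /= => /andP[h1 h2]; apply: fdd; rewrite (ltW h1) (ltW h2).
- apply: derivable_within_continuous => y; rewrite in_itv /= => /andP[h1 h2].
  by apply: (fd y _).2; rewrite h1 h2.
- by rewrite in_itv /=; apply/andP; split=> //; apply: (le_trans au uv).
- by rewrite in_itv /=; apply/andP; split=> //; apply: (le_trans uv vb).
- exact: uv.
Qed.

Lemma d1_ndecr f a b :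
  (forall u, a <= u <= b -> derivable f u 1 /\ derivable (derive1 f) u 1) ->
  (forall u, a <= u <= b -> 0 <= derive1 (derive1 f) u) ->
  forall u v, a <= u -> u <= v -> v <= b -> derive1 f u <= derive1 f v.
Proof.
move=> fd fdd u v au uv vb.
apply: (@ger0_derive1_le_cc _ (derive1 f) a b).
- by move=> y; rewrite in_itv /= => /andP[h1 h2]; apply: (fd y _).2; rewrite (ltW h1) (ltW h2).
- by move=> y; rewrite in_itv /= => /andP[h1 h2]; apply: fdd; rewrite (ltW h1) (ltW h2).
- apply: derivable_within_continuous => y; rewrite in_itv /= => /andP[h1 h2].
  by apply: (fd y _).2; rewrite h1 h2.
- by rewrite in_itv /=; apply/andP; split=> //; apply: (le_trans uv vb).
- by rewrite in_itv /=; apply/andP; split=> //; apply: (le_trans au uv).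
- exact: uv.
Qed.

Lemma slope_mono_cvx f a b x z1 z2 :
  (forall u, a <= u <= b -> derivable f u 1) ->
  (forall u v, a <= u -> u <= v -> v <= b -> derive1 f u <= derive1 f v) ->
  a <= x -> x <= b -> a <= z1 -> z1 < z2 -> z2 <= b -> z1 != x -> z2 != x ->
  (f z1 - f x) / (z1 - x) <= (f z2 - f x) / (z2 - x).
Proof.
move=> fd fm ax xb az1 z12 z2b n1 n2.
have := @slope_mono (- f) a b x z1 z2.
have e : forall u, a <= u <= b -> derive1 (- f) u = - derive1 f u.
  by move=> u /fd hu; rewrite derive1N.
have /[swap]/[apply] : forall u, a <= u <= b -> derivable (- f) u 1.
  by move=> u /fd hu; exact: derivableN.
have /[swap]/[apply] : forall u v, a <= u -> u <= v -> v <= b -> derive1 (- f) v <= derive1 (- f) u.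
  move=> u v au uv vb; rewrite !e ?au ?vb ?(le_trans uv vb) ?(le_trans au uv) //.
  by rewrite lerN2 fm.
move=> /(_ ax xb az1 z12 z2b n1 n2) h.
have E : forall z, (- f) z - (- f) x = - (f z - f x).
  by move=> z; change ((- f z) - (- f x) = - (f z - f x)); lra.
by rewrite !E !mulNr lerN2 in h.
Qed.

Lemma right_of_dnbhs (g : R -> R) (a l : R) : g @ a^' --> l -> g @ a^'+ --> l.
Proof.
move=> hg A /hg /nbhs_ballP [_ /posnumP[e] xe_A].
by exists e%:num => //= y xe_y /gt_eqF/negbT/xe_A; exact.
Qed.

Lemma deriv_seq f x (u : nat -> R) : derivable f x 1 ->
  (forall n, 0 < u n) -> u n @[n --> \oo] --> 0 ->
  (f (u n + x) - f x) / u n @[n --> \oo] --> derive1 f x.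
Proof.
move=> df u0 uc.
have e : (fun h => h^-1 *: ((f \o shift x) (h *: 1) - f x)) =
         (fun h => h^-1 *: (f (h + x) - f x)).
  by apply: funext => h /=; rewrite /shift /= -[h *: 1]/(h * 1) mulr1.
have h1 : (fun h => h^-1 *: (f (h + x) - f x)) @ 0^' --> derive1 f x.
  by move: df; rewrite /derivable e.
have h2 := right_of_dnbhs h1.
have := (cvg_at_rightP (fun h => h^-1 *: (f (h + x) - f x)) 0 (derive1 f x)).1 h2 u (conj u0 uc).
by apply: cvg_trans; apply: near_eq_cvg; near=> n; rewrite /= mulrC.
Unshelve. all: end_near.
Qed.

Lemma bigmax_wit (F : nat -> \bar R) (Pr : pred nat) (s : seq nat) v :
  \big[maxe/-oo%E]_(t <- s | Pr t) F t = v%:E -> exists t, Pr t /\ F t = v%:E.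
Proof.
elim: s => [|t s IH]; first by rewrite big_nil.
rewrite big_cons; case: ifP => Pt; last exact: IH.
case: (leP (F t) (\big[maxe/-oo%E]_(j <- s | Pr j) F j)) => h.
  exact: IH.
by move=> e; exists t.
Qed.

Lemma bigmin_wit (F : nat -> \bar R) (Pr : pred nat) (s : seq nat) v :
  \big[mine/+oo%E]_(t <- s | Pr t) F t = v%:E -> exists t, Pr t /\ F t = v%:E.
Proof.
elim: s => [|t s IH]; first by rewrite big_nil.
rewrite big_cons; case: ifP => Pt; last exact: IH.
case: (leP (F t) (\big[mine/+oo%E]_(j <- s | Pr j) F j)) => h.
  by move=> e; exists t.
exact: IH.
Qed.

End Real.

Section Prob.
Context (R : realType) (d : measure_display) (Omega : measurableType d)
        (P : probability Omega R).

Lemma mpre (g : Omega -> R) (B : set R) :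
  measurable_fun setT g -> measurable B -> measurable (g @^-1` B).
Proof. by move=> mg mB; rewrite -[_ @^-1` _]setTI; exact: mg measurableT _ mB. Qed.

Lemma ball_meas (A : Omega -> R) (x h : R) : measurable_fun setT A ->
  measurable [set w | `|A w - x| < h].
Proof.
move=> mA.
have m1 : measurable_fun setT (fun w => `|A w - x|).
  apply: (measurableT_comp (@normr_measurable R setT)).
  exact: measurable_funB mA (measurable_cst _).
have := mpre m1 (measurable_itv `]-oo, h[).
by congr measurable; apply/seteqP; split => w /=; rewrite in_itv.
Qed.

Lemma Rint_ae_le (S : set Omega) (f g : Omega -> R) : measurable S ->
  P.-integrable S (EFin \o f) -> P.-integrable S (EFin \o g) ->
  {ae P, forall w, f w <= g w} ->
  Rintegral P S f <= Rintegral P S g.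
Proof.
move=> mS i1 i2 H.
rewrite -subr_ge0 -RintegralB //.
set h := fun w => g w - f w.
set h' := fun w => Num.max (h w) 0.
have mh : measurable_fun S (EFin \o h).
  apply/measurable_EFinP; apply: measurable_funB.
    by apply/measurable_EFinP; case/integrableP: i2.
  by apply/measurable_EFinP; case/integrableP: i1.
have mh' : measurable_fun S (EFin \o h').
  apply/measurable_EFinP; apply: measurable_maxr; last exact: measurable_cst.
  by apply/measurable_EFinP.
have e : (\int[P]_(w in S) (EFin \o h) w = \int[P]_(w in S) (EFin \o h') w)%E.
  apply: ae_eq_integral => //.
  apply: filterS H => w hw _ /=; congr EFin.
  by rewrite /h' max_l // /h subr_ge0.
rewrite /Rintegral; apply: fine_ge0.
rewrite -/h; rewrite [X in (0 <= X)%E]e.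
apply: integral_ge0 => w _ /=; rewrite lee_fin /h'.
by rewrite le_max lexx orbT.
Qed.

Lemma la_le (A Z1 Z2 : Omega -> R) c x h : measurable_fun setT A ->
  P.-integrable setT (EFin \o Z1) -> P.-integrable setT (EFin \o Z2) ->
  {ae P, forall w, Z1 w <= c * Z2 w} ->
  local_avg P A Z1 x h <= c * local_avg P A Z2 x h.
Proof.
move=> mA i1 i2 H; rewrite /local_avg.
set S := [set w | `|A w - x| < h].
have mS : measurable S by exact: ball_meas.
have j1 := integrableS measurableT mS (@subsetT _ S) i1.
have j2 := integrableS measurableT mS (@subsetT _ S) i2.
have j2c : P.-integrable S (EFin \o (fun w => c * Z2 w)).
  by apply: (eq_integrable mS _ _ _ (integrableZl mS c j2)) => w _ /=; rewrite EFinM.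
have := Rint_ae_le mS j1 j2c H.
rewrite RintegralZl // => le1.
rewrite mulrA; apply: ler_wpM2r => //.
by rewrite invr_ge0 fine_ge0.
Qed.

Lemma ce_le (A Z1 Z2 : Omega -> R) c x : measurable_fun setT A ->
  cond_exp_defined P A Z1 x -> cond_exp_defined P A Z2 x ->
  {ae P, forall w, Z1 w <= c * Z2 w} ->
  cond_exp P A Z1 x <= c * cond_exp P A Z2 x.
Proof.
move=> mA [i1 c1] [i2 c2] H; rewrite /cond_exp.
apply: (ler_cvg_to c1 (cvgMl_tmp (a:=c) c2)).
by near=> h; apply: la_le.
Unshelve. all: end_near.
Qed.

Lemma la_ge (A Z1 Z2 : Omega -> R) c x h : measurable_fun setT A ->
  P.-integrable setT (EFin \o Z1) -> P.-integrable setT (EFin \o Z2) ->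
  {ae P, forall w, c * Z2 w <= Z1 w} ->
  c * local_avg P A Z2 x h <= local_avg P A Z1 x h.
Proof.
move=> mA i1 i2 H; rewrite /local_avg.
set S := [set w | `|A w - x| < h].
have mS : measurable S by exact: ball_meas.
have j1 := integrableS measurableT mS (@subsetT _ S) i1.
have j2 := integrableS measurableT mS (@subsetT _ S) i2.
have j2c : P.-integrable S (EFin \o (fun w => c * Z2 w)).
  by apply: (eq_integrable mS _ _ _ (integrableZl mS c j2)) => w _ /=; rewrite EFinM.
have := Rint_ae_le mS j2c j1 H.
rewrite RintegralZl // => le1.
rewrite mulrA; apply: ler_wpM2r => //.
by rewrite invr_ge0 fine_ge0.
Qed.

Lemma ce_ge (A Z1 Z2 : Omega -> R) c x : measurable_fun setT A ->
  cond_exp_defined P A Z1 x -> cond_exp_defined P A Z2 x ->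
  {ae P, forall w, c * Z2 w <= Z1 w} ->
  c * cond_exp P A Z2 x <= cond_exp P A Z1 x.
Proof.
move=> mA [i1 c1] [i2 c2] H; rewrite /cond_exp.
apply: (ler_cvg_to (cvgMl_tmp (a:=c) c2) c1).
by near=> h; apply: la_ge.
Unshelve. all: end_near.
Qed.

Lemma ae_supp (A : Omega -> R) : measurable_fun setT A ->
  {ae P, forall w, supp P A (A w)}.
Proof.
move=> mA.
pose r (m : nat) : R := (m.+1%:R)^-1.
pose c (m k : nat) (s : bool) : R := (if s then - k%:R else k%:R) * r m.
pose B m k s := [set w | `|A w - c m k s| < r m].
have mB : forall m k s, measurable (B m k s) by move=> m k s; exact: ball_meas.
have Q : forall m k s, {ae P, forall w, P (B m k s) = 0%E -> ~ B m k s w}.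
  move=> m k s; have [h0|hn] := eqVneq (P (B m k s)) 0%E.
  - exists (B m k s); split => // w /= hw; apply: contrapT => hB; apply: hw => _; exact: hB.
  - by apply: aeW => w h; rewrite h eqxx in hn.
have Q2 : {ae P, forall w, forall m k s, P (B m k s) = 0%E -> ~ B m k s w}.
  apply: ae_foralln => m; apply: ae_foralln => k.
  have h1 := Q m k true; have h2 := Q m k false.
  near=> w; case.
    by near: w; exact: h1.
  by near: w; exact: h2.
apply: filterS Q2 => w Hw e e0.
rewrite lt_neqAle measure_ge0 andbT eq_sym; apply/negP => /eqP h0.
set y := A w.
pose m := Num.Def.trunc (2 / e).
have hm : 2 / e < m.+1%:R := truncnS_gt _.
have M0 : 0 < m.+1%:R :> R by [].
have r0 : 0 < r m by rewrite invr_gt0.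
have hr : 2 * r m < e.
  rewrite /r -/(2 / m.+1%:R) ltr_pdivrMr //.
  by move: hm; rewrite ltr_pdivrMr // mulrC.
pose j := Num.Def.floor (y * m.+1%:R).
have hj1 : j%:~R <= y * m.+1%:R := floor_le _.
have hj2 : y * m.+1%:R < j%:~R + 1.
  by have := floorD1_gt (y * m.+1%:R); rewrite -/j rmorphD /= rmorph1.
have hy1 : j%:~R * r m <= y.
  by have := ler_wpM2r (ltW r0) hj1; rewrite /r mulfK // gt_eqF.
have hy2 : y < j%:~R * r m + r m.
  by move: hj2; rewrite -(ltr_pM2r r0) /r mulfK ?gt_eqF // mulrDl mul1r.
have [k [s ck]] : exists k s, c m k s = j%:~R * r m.
  rewrite /j; case: (Num.Def.floor _) => [k|k]; [exists k, false | exists k.+1, true].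
    by rewrite /c -pmulrn.
  by rewrite /c NegzE mulrNz -pmulrn.
have hB : B m k s w.
  rewrite /B /= ltr_norml ck -/y; apply/andP; split; lra.
have sub : B m k s `<=` [set w' | `|A w' - y| < e].
  move=> w'; rewrite /B /= ltr_norml ck => /andP[h1 h2].
  rewrite ltr_norml; apply/andP; split; lra.
exact: (Hw m k s (subset_measure0 (mB m k s) (ball_meas y e mA) sub h0) hB).
Unshelve. all: end_near.
Qed.

End Prob.

Section Main.
Context (R : realType).

Lemma YU d (Omega : measurableType d) (P : probability Omega R) (T : nat) (Xs : set R)
    (X : nat -> Omega -> R) (U Y : nat -> R -> Omega -> R) (g : nat -> R -> R) z :
  (1 <= T)%N -> assumption1 P T Xs X U Y g -> assumption2 P T Xs Y g ->
  measurable_fun setT (U T z) -> Xs z -> {ae P, forall w, Y T z w = U T z w}.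
Proof.
move=> T1 [A1 _] [gs gid] mU Xz.
have hT : (1 <= T <= T)%N by rewrite T1 leqnn.
have gsT := gs T hT.
have eY : Y T z = g T \o U T z by apply: funext => w; rewrite /= (A1 T z w hT Xz).
have gnd : {homo g T : a b / a <= b}.
  by move=> a b; rewrite le_eqVlt => /predU1P[-> //|/gsT/ltW].
have mY : measurable_fun setT (Y T z).
  by rewrite eY; apply: measurableT_comp => //; exact: nondecreasing_measurable.
apply: filterS (ae_supp P mY) => w hw.
have hs : suppYT P T Xs Y (Y T z w) by exists z.
have hg0 := gid _ hs.
have eU := A1 T z w hT Xz.
have e : g T (Y T z w) = g T (U T z w) by rewrite hg0 -eU.
by case: (ltgtP (Y T z w) (U T z w)) => // h; have := gsT _ _ h; rewrite e ltxx.
Qed.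

Lemma alg_ge (x x' z fx fx' fz : R) : x < x' ->
  (fz - fx) / (z - x) <= (fx' - fx) / (x' - x) ->
  (x' - x) / (z - x) * (fz - fx) <= fx' - fx.
Proof.
move=> xx' h; rewrite mulrAC -mulrA.
have p : 0 <= x' - x by rewrite subr_ge0 ltW.
have := ler_wpM2l p h; rewrite [X in _ <= X -> _]mulrC divfK //.
by rewrite subr_eq0 gt_eqF.
Qed.

Lemma alg_le (x x' z fx fx' fz : R) : x < x' ->
  (fx' - fx) / (x' - x) <= (fz - fx) / (z - x) ->
  fx' - fx <= (x' - x) / (z - x) * (fz - fx).
Proof.
move=> xx' h; rewrite mulrAC -mulrA.
have p : 0 <= x' - x by rewrite subr_ge0 ltW.
have := ler_wpM2l p h; rewrite [X in X <= _ -> _]mulrC divfK //.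
by rewrite subr_eq0 gt_eqF.
Qed.

Lemma fin_a (x x' lo up A Alo Aup : R) : x < x' ->
  (x' - x) / (up - x) * Aup <= A -> A <= (x' - x) / (lo - x) * Alo ->
  (x' - x) * Num.min (Alo / (lo - x)) (Aup / (up - x)) <= A
  /\ A <= (x' - x) * Num.max (Alo / (lo - x)) (Aup / (up - x)).
Proof.
move=> xx' h1 h2.
have p : 0 <= x' - x by rewrite subr_ge0 ltW.
rewrite mulrAC -mulrA in h1; rewrite mulrAC -mulrA in h2.
split.
  by apply: le_trans h1; apply: ler_wpM2l => //; rewrite ge_min lexx orbT.
by apply: (le_trans h2); apply: ler_wpM2l => //; rewrite le_max lexx.
Qed.

Lemma fin_a2 (x x' lo up A Alo Aup : R) : x < x' ->
  (x' - x) / (lo - x) * Alo <= A -> A <= (x' - x) / (up - x) * Aup ->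
  (x' - x) * Num.min (Alo / (lo - x)) (Aup / (up - x)) <= A
  /\ A <= (x' - x) * Num.max (Alo / (lo - x)) (Aup / (up - x)).
Proof.
move=> xx' h1 h2; rewrite minC maxC; exact: fin_a.
Qed.

Lemma lim_bounds (g : R -> R) x (u : nat -> R) L H : derivable g x 1 ->
  (forall n, 0 < u n) -> u n @[n --> \oo] --> 0 ->
  (forall n, L <= (g (u n + x) - g x) / u n <= H) -> L <= derive1 g x <= H.
Proof.
move=> dg u0 uc hb; have hl := deriv_seq dg u0 uc.
apply/andP; split.
  apply: (ler_cvg_to (cvg_cst L) hl); apply: nearW => n.
  by case/andP: (hb n).
apply: (ler_cvg_to hl (cvg_cst H)); apply: nearW => n.
by case/andP: (hb n).
Qed.

Lemma fin_b (x lo up A Alo Aup : R) :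
  (up - x)^-1 * Aup <= A -> A <= (lo - x)^-1 * Alo ->
  Num.min (Alo / (lo - x)) (Aup / (up - x)) <= A
  /\ A <= Num.max (Alo / (lo - x)) (Aup / (up - x)).
Proof.
move=> h1 h2; rewrite mulrC in h1; rewrite mulrC in h2; split.
  by apply: le_trans h1; rewrite ge_min lexx orbT.
by apply: (le_trans h2); rewrite le_max lexx.
Qed.

Lemma fin_b2 (x lo up A Alo Aup : R) :
  (lo - x)^-1 * Alo <= A -> A <= (up - x)^-1 * Aup ->
  Num.min (Alo / (lo - x)) (Aup / (up - x)) <= A
  /\ A <= Num.max (Alo / (lo - x)) (Aup / (up - x)).
Proof. by move=> h1 h2; rewrite minC maxC; exact: fin_b. Qed.

End Main.


End Helpers.
Import Helpers.

Theorem theorem3 (R : realType) (d : measure_display) (Omega : measurableType d)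
    (P : probability Omega R) (T : nat) (Xs : set R)
    (X : nat -> Omega -> R) (U Y : nat -> R -> Omega -> R) (g : nat -> R -> R) :
  (1 <= T)%N ->
  (forall t, (1 <= t <= T)%N -> measurable_fun setT (X t)) ->
  (forall t w, (1 <= t <= T)%N -> Xs (X t w)) ->
  (forall t x, (1 <= t <= T)%N -> Xs x -> measurable_fun setT (U t x)) ->
  assumption1 P T Xs X U Y g ->
  assumption2 P T Xs Y g ->
  assumption3 P T X ->
  forall x x' : R, supp P (X T) x -> supp P (X T) x' ->
  (* (a) *)
  (forall lo up : R, x < x' ->
     x_low P X T x x' = lo%:E -> x_up P X T x x' = up%:E ->
     loc_concave_or_convex P Xs (U T) (Num.min x lo) up ->
     ATT_defined P (X T) (Y T) x x' ->
     ATT_defined P (X T) (Y T) x lo -> ATT_defined P (X T) (Y T) x up ->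
     (x' - x) * Num.min (ATT P (X T) (Y T) x lo / (lo - x))
                        (ATT P (X T) (Y T) x up / (up - x))
       <= ATT P (X T) (Y T) x x'
     /\ ATT P (X T) (Y T) x x'
       <= (x' - x) * Num.max (ATT P (X T) (Y T) x lo / (lo - x))
                             (ATT P (X T) (Y T) x up / (up - x)))
  /\
  (* (b) *)
  (forall lo up : R,
     x_low P X T x x = lo%:E -> x_up P X T x x = up%:E ->
     loc_concave_or_convex P Xs (U T) lo up ->
     AME_defined P (X T) (Y T) x ->
     ATT_defined P (X T) (Y T) x lo -> ATT_defined P (X T) (Y T) x up ->
     Num.min (ATT P (X T) (Y T) x lo / (lo - x))
             (ATT P (X T) (Y T) x up / (up - x))
       <= AME P (X T) (Y T) x
     /\ AME P (X T) (Y T) x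
       <= Num.max (ATT P (X T) (Y T) x lo / (lo - x))
                  (ATT P (X T) (Y T) x up / (up - x))).
Proof.
move=> T1 mX XsX mU A1 A2 A3 x x' sx sx'.
have hT : (1 <= T <= T)%N by rewrite T1 leqnn.
have YUz : forall z, Xs z -> {ae P, forall w, Y T z w = U T z w}.
  by move=> z hz; exact: (YU T1 A1 A2 (mU T z hT hz) hz).
have mXT := mX T hT.
have inXs : forall a b z, `[a, b] `<=` Xs -> a <= z -> z <= b -> Xs z.
  by move=> a b z sub h1 h2; apply: sub; rewrite /= in_itv /= h1 h2.
split.
- move=> lo up xx' hlo hup [sub [td cc]] dx' dlo dup.
  have [t [/andP[nlo ltlo] elo]] := bigmax_wit hlo.
  rewrite elo lte_fin in ltlo; rewrite elo eqe in nlo.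
  have [t' [/andP[nup ltup] eup]] := bigmin_wit hup.
  rewrite eup lte_fin in ltup; rewrite eup eqe in nup.
  set a := Num.min x lo.
  have ax : a <= x by rewrite ge_min lexx.
  have alo : a <= lo by rewrite ge_min lexx orbT.
  have xup : x < up := lt_trans xx' ltup.
  have loup : lo < up := lt_trans ltlo ltup.
  have ax' : a <= x' := le_trans ax (ltW xx').
  have aup : a <= up := le_trans ax (ltW xup).
  have Xx := inXs _ _ _ sub ax (ltW xup).
  have Xx' := inXs _ _ _ sub ax' (ltW ltup).
  have Xlo := inXs _ _ _ sub alo (ltW loup).
  have Xup := inXs _ _ _ sub aup (lexx up).
  have nx' : x' != x by rewrite gt_eqF.
  have base : {ae P, forall w, [/\ Y T x w = U T x w, Y T x' w = U T x' w,
      Y T lo w = U T lo w, Y T up w = U T up w &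
      twice_diff_on (fun y => U T y w) a up]}.
    near=> w; split.
    + by near: w; exact: YUz.
    + by near: w; exact: YUz.
    + by near: w; exact: YUz.
    + by near: w; exact: YUz.
    + by near: w; exact: td.
  case: cc => cc.
  + have H : {ae P, forall w,
        (x' - x) / (up - x) * (Y T up w - Y T x w) <= Y T x' w - Y T x w
        /\ Y T x' w - Y T x w <= (x' - x) / (lo - x) * (Y T lo w - Y T x w)}.
      move: base cc; apply: filterS2 => w [e1 e2 e3 e4 tw] cw.
      have fd : forall u, a <= u <= up -> derivable (fun y => U T y w) u 1.
        by move=> u hu; exact: (tw u hu).1.
      have fm := d1_nincr tw cw.
      rewrite e1 e2 e3 e4; split.
        apply: alg_ge => //.
        exact: (slope_mono fd fm ax (ltW xup) ax' ltup (lexx up) nx' nup).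
      apply: alg_le => //.
      exact: (slope_mono fd fm ax (ltW xup) alo ltlo (ltW ltup) nlo nx').
    have g1 := ce_ge mXT dx' dup (filterS (fun w (h : _ /\ _) => h.1) H).
    have g2 := ce_le mXT dx' dlo (filterS (fun w (h : _ /\ _) => h.2) H).
    exact: (fin_a xx' (g1 _) (g2 _)).
  + have H : {ae P, forall w,
        (x' - x) / (lo - x) * (Y T lo w - Y T x w) <= Y T x' w - Y T x w
        /\ Y T x' w - Y T x w <= (x' - x) / (up - x) * (Y T up w - Y T x w)}.
      move: base cc; apply: filterS2 => w [e1 e2 e3 e4 tw] cw.
      have fd : forall u, a <= u <= up -> derivable (fun y => U T y w) u 1.
        by move=> u hu; exact: (tw u hu).1.
      have fm := d1_ndecr tw cw.
      rewrite e1 e2 e3 e4; split.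
        apply: alg_ge => //.
        exact: (slope_mono_cvx fd fm ax (ltW xup) alo ltlo (ltW ltup) nlo nx').
      apply: alg_le => //.
      exact: (slope_mono_cvx fd fm ax (ltW xup) ax' ltup (lexx up) nx' nup).
    have g1 := ce_ge mXT dx' dlo (filterS (fun w (h : _ /\ _) => h.1) H).
    have g2 := ce_le mXT dx' dup (filterS (fun w (h : _ /\ _) => h.2) H).
    exact: (fin_a2 xx' (g1 _) (g2 _)).
- move=> lo up hlo hup [sub [td cc]] [dder dZ] dlo dup.
  have [t [/andP[nlo ltlo] elo]] := bigmax_wit hlo.
  rewrite elo lte_fin in ltlo; rewrite elo eqe in nlo.
  have [t' [/andP[nup ltup] eup]] := bigmin_wit hup.
  rewrite eup lte_fin in ltup; rewrite eup eqe in nup.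
  have loup : lo < up := lt_trans ltlo ltup.
  have Xx := inXs _ _ _ sub (ltW ltlo) (ltW ltup).
  have Xlo := inXs _ _ _ sub (lexx lo) (ltW loup).
  have Xup := inXs _ _ _ sub (ltW loup) (lexx up).
  pose u := fun n : nat => (up - x) / 2 * harmonic n.
  have hh : forall n, 0 < harmonic n :> R /\ harmonic n <= 1 :> R.
    move=> n; rewrite /harmonic /=; split; first by rewrite invr_gt0.
    by rewrite invf_le1 // ler1n.
  have d0 : 0 < (up - x) / 2 by rewrite divr_gt0 // subr_gt0.
  have u0 : forall n, 0 < u n by move=> n; rewrite mulr_gt0 //; case: (hh n).
  have ule : forall n, u n <= (up - x) / 2.
    by move=> n; apply: ler_piMr; [exact: ltW | case: (hh n)].
  have uc : u n @[n --> \oo] --> 0.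
    have := cvgMl_tmp (a := (up - x) / 2) (@cvg_harmonic R).
    by rewrite mulr0 => h; exact: h.
  have ulo : forall n, lo < u n + x by move=> n; have := u0 n; lra.
  have uup : forall n, u n + x < up by move=> n; have := ule n; lra.
  have unx : forall n, u n + x != x by move=> n; rewrite gt_eqF //; have := u0 n; lra.
  have Xun : forall n, Xs (u n + x).
    by move=> n; exact: (inXs _ _ _ sub (ltW (ulo n)) (ltW (uup n))).
  have base : {ae P, forall w, [/\ derivable (fun y => Y T y w) x 1, Y T x w = U T x w,
      Y T lo w = U T lo w, Y T up w = U T up w &
      twice_diff_on (fun y => U T y w) lo up]}.
    near=> w; split.
    + by near: w; exact: dder.
    + by near: w; exact: YUz.
    + by near: w; exact: YUz.
    + by near: w; exact: YUz.
    + by near: w; exact: td.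
  have baseN : {ae P, forall w, forall n, Y T (u n + x) w = U T (u n + x) w}.
    by apply: ae_foralln => n; exact: YUz.
  have base2 : {ae P, forall w, [/\ derivable (fun y => Y T y w) x 1, Y T x w = U T x w,
      Y T lo w = U T lo w, Y T up w = U T up w &
      twice_diff_on (fun y => U T y w) lo up] /\
      forall n, Y T (u n + x) w = U T (u n + x) w}.
    by move: base baseN; apply: filterS2 => w h1 h2.
  have E : forall w n, (U T (u n + x) w - U T x w) / u n =
                       (U T (u n + x) w - U T x w) / (u n + x - x).
    by move=> w n; rewrite addrK.
  case: cc => cc.
  + have H : {ae P, forall w,
        derive1 (fun y => Y T y w) x <= (lo - x)^-1 * (Y T lo w - Y T x w)
        /\ (up - x)^-1 * (Y T up w - Y T x w) <= derive1 (fun y => Y T y w) x}.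
      move: base2 cc; apply: filterS2 => w [[dY e1 e2 e3 tw] en] cw.
      have fd : forall v, lo <= v <= up -> derivable (fun y => U T y w) v 1.
        by move=> v hv; exact: (tw v hv).1.
      have fm := d1_nincr tw cw.
      have hb : forall n, (U T up w - U T x w) / (up - x) <=
          (Y T (u n + x) w - Y T x w) / u n <= (U T lo w - U T x w) / (lo - x).
        move=> n; rewrite en e1 E; apply/andP; split.
          exact: (slope_mono fd fm (ltW ltlo) (ltW ltup) (ltW (ulo n)) (uup n) (lexx up) (unx n) nup).
        exact: (slope_mono fd fm (ltW ltlo) (ltW ltup) (lexx lo) (ulo n) (ltW (uup n)) nlo (unx n)).
      have /andP[b1 b2] := lim_bounds dY u0 uc hb.
      by rewrite e1 e2 e3; split; rewrite mulrC.
    have g1 := ce_le mXT dZ dlo (filterS (fun w (h : _ /\ _) => h.1) H).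
    have g2 := ce_ge mXT dZ dup (filterS (fun w (h : _ /\ _) => h.2) H).
    exact: (fin_b (g2 _) (g1 _)).
  + have H : {ae P, forall w,
        (lo - x)^-1 * (Y T lo w - Y T x w) <= derive1 (fun y => Y T y w) x
        /\ derive1 (fun y => Y T y w) x <= (up - x)^-1 * (Y T up w - Y T x w)}.
      move: base2 cc; apply: filterS2 => w [[dY e1 e2 e3 tw] en] cw.
      have fd : forall v, lo <= v <= up -> derivable (fun y => U T y w) v 1.
        by move=> v hv; exact: (tw v hv).1.
      have fm := d1_ndecr tw cw.
      have hb : forall n, (U T lo w - U T x w) / (lo - x) <=
          (Y T (u n + x) w - Y T x w) / u n <= (U T up w - U T x w) / (up - x).
        move=> n; rewrite en e1 E; apply/andP; split.
          exact: (slope_mono_cvx fd fm (ltW ltlo) (ltW ltup) (lexx lo) (ulo n) (ltW (uup n)) nlo (unx n)).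
        exact: (slope_mono_cvx fd fm (ltW ltlo) (ltW ltup) (ltW (ulo n)) (uup n) (lexx up) (unx n) nup).
      have /andP[b1 b2] := lim_bounds dY u0 uc hb.
      by rewrite e1 e2 e3; split; rewrite mulrC.
    have g1 := ce_ge mXT dZ dlo (filterS (fun w (h : _ /\ _) => h.1) H).
    have g2 := ce_le mXT dZ dup (filterS (fun w (h : _ /\ _) => h.2) H).
    exact: (fin_b2 (g1 _) (g2 _)).
Unshelve. all: end_near.
Qed.
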